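(* For an integer $m\ge0$ let $\mathbf{S}_m=\{1,\dots,m\}^2$, and let $B_{\mathbf{S}}(m,k)$ be the number of $k$-element subsets of $\mathbf{S}_m$ no two distinct elements $(i,j),(i',j')$ of which satisfy $i-j=i'-j'$ or $i+j=i'+j'$ (nonattacking placements of $k$ bishops). Then for all integers $m,k\ge 0$, $$B_{\mathbf{S}}(m,k)=\sum_{j=0}^{k}\sum_{i=0}^{j}\binom{\lfloor m/2\rfloor}{i}\left\{ {m-i \atop m-j}\right\}\sum_{l=0}^{k-j}\binom{\lceil m/2\rceil}{l}\left\{ {m-l \atop m-k+j}\right\}.$$
   Context: The Stirling numbers of the second kind $\left\{ {n \atop r}\right\}$ are used in the extended sense for all integers $n,r$: for $n,r\ge0$ they are the usual ones; for $n,r\le 0$, $\left\{ {n \atop r}\right\}=\left[{-r \atop -n}\right]$, the unsigned Stirling number of the first kind; and they are $0$ when one of $n,r$ is positive and the other negative (Knuth's extension, satisfying $\left\{ {n \atop r}\right\}=r\left\{ {n-1 \atop r}\right\}+\left\{ {n-1 \atop r-1}\right\}$ for all integers). *)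

(* Defs.v *)
From mathcomp Require Import all_boot all_order all_algebra.
Set Implicit Arguments. Unset Strict Implicit. Unset Printing Implicit Defensive.
Import GRing.Theory Num.Theory.

Fixpoint stirling2 (n k : nat) : nat :=
  match n, k with
  | 0, 0 => 1
  | 0, _.+1 => 0
  | _.+1, 0 => 0
  | n'.+1, k'.+1 => k'.+1 * stirling2 n' k'.+1 + stirling2 n' k'
  end.

Fixpoint stirling1 (n k : nat) : nat :=
  match n, k with
  | 0, 0 => 1
  | 0, _.+1 => 0
  | _.+1, 0 => 0
  | n'.+1, k'.+1 => n' * stirling1 n' k'.+1 + stirling1 n' k'
  end.

(* Knuth's extension of {n \atop r} to all integers n, r:
   usual for n, r >= 0; [-r \atop -n] for n, r <= 0; 0 otherwise. *)
Definition stirling2Z (n r : int) : nat :=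
  match n, r with
  | Posz a, Posz b => stirling2 a b
  | Negz a, Negz b => stirling1 b.+1 a.+1
  | Posz 0, Negz b => stirling1 b.+1 0
  | Negz a, Posz 0 => stirling1 0 a.+1
  | _, _ => 0
  end.

(* The board S_m = {1..m}^2, encoded as 'I_m * 'I_m with (i,j) standing for (i+1,j+1). *)
Definition diff_coord (m : nat) (x : 'I_m * 'I_m) : int :=
  ((x.1 : nat).+1)%:Z - ((x.2 : nat).+1)%:Z.
Definition sum_coord (m : nat) (x : 'I_m * 'I_m) : int :=
  ((x.1 : nat).+1)%:Z + ((x.2 : nat).+1)%:Z.

Definition nonattacking (m : nat) (A : {set 'I_m * 'I_m}) : bool :=
  [forall x in A, forall y in A,
     (x != y) ==> ((diff_coord x != diff_coord y) && (sum_coord x != sum_coord y))].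

Definition bishopsS (m k : nat) : nat :=
  #|[set A : {set 'I_m * 'I_m} | (#|A| == k) && nonattacking A]|.

(* Main.v *)
Require Import Defs.
From mathcomp Require Import all_boot all_order all_algebra.
From mathcomp Require Import zify.
Set Implicit Arguments. Unset Strict Implicit. Unset Printing Implicit Defensive.


Section Rook.
Variables (T U : finType) (f g : T -> U).

Definition na (A : {set T}) := [forall x in A, forall y in A,
  (x != y) ==> (f x != f y) && (g x != g y)].
Definition NS (P : {set T}) k :=
  [set A : {set T} | (A \subset P) && (#|A| == k) && na A].
Definition N P k := #|NS P k|.

Lemma naP (A : {set T}) : reflect (forall x y, x \in A -> y \in A -> x != y ->
   f x != f y /\ g x != g y) (na A).
Proof.
apply: (iffP forallP) => [H x y xA yA nxy | H x].
  by move: (H x) => /implyP /(_ xA) /forallP /(_ y) /implyP /(_ yA) /implyP /(_ nxy) /andP.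
apply/implyP => xA; apply/forallP => y; apply/implyP => yA; apply/implyP => nxy.
by case: (H x y xA yA nxy) => -> ->.
Qed.

Lemma na_sub (A B : {set T}) : B \subset A -> na A -> na B.
Proof.
move=> /subsetP sBA /naP H; apply/naP => x y xB yB; exact: H (sBA _ xB) (sBA _ yB).
Qed.

Lemma inNS A P k : (A \in NS P k) = [&& A \subset P, #|A| == k & na A].
Proof. by rewrite inE andbA. Qed.

Lemma N0 k : N set0 k = (k == 0).
Proof.
rewrite /N; case: k => [|k].
  have -> : NS set0 0 = [set set0].
    apply/setP => A; rewrite inNS subset0 in_set1.
    case: (A =P set0) => [->|] //=; rewrite cards0 /=.
    by apply/naP => x y; rewrite inE.
  by rewrite cards1.
apply/eqP; rewrite cards_eq0; apply/eqP/setP => A; rewrite inNS subset0 inE.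
by case: (A =P set0) => [->|] //=; rewrite cards0.
Qed.

Lemma NS0 P : N P 0 = 1.
Proof.
rewrite /N; have -> : NS P 0 = [set set0].
  apply/setP => A; rewrite inNS cards_eq0 in_set1.
  case: (A =P set0) => [->|] //=; rewrite ?andbF // sub0set /=.
  by apply/naP => x y; rewrite inE.
by rewrite cards1.
Qed.
End Rook.

Section Step.
Variables (T U : finType) (f g : T -> U).
Variables (P R : {set T}).
Hypothesis notPR : forall x, x \in R -> x \notin P.
Hypothesis gR : {in R &, forall x y, g x = g y}.
Hypothesis fR : {in R &, injective f}.
Hypothesis nest : forall y, y \in P -> exists2 x, x \in R & f x = f y.
Hypothesis gRP : forall x y, x \in R -> y \in P -> g x != g y.


Lemma ext_card A k : A \in NS f g P k ->
  #|[set x in R | f x \notin f @: A]| = #|R| - k.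
Proof.
rewrite inNS => /and3P [sAP /eqP cA naA].
have := cardsID [set x | f x \in f @: A] R.
have -> : R :\: [set x | f x \in f @: A] = [set x in R | f x \notin f @: A].
  by apply/setP => x; rewrite !inE andbC.
have -> : #|R :&: [set x | f x \in f @: A]| = k.
  have fiA : {in A &, injective f}.
    move=> x y xA yA fxy; apply/eqP; apply/negPn/negP => nxy.
    by case: (naP _ _ _ naA x y xA yA nxy); rewrite fxy eqxx.
  rewrite -cA -(card_in_imset fiA) -(card_in_imset (sub_in2 _ fR)); last first.
    by move=> x; rewrite inE => /andP[].
  apply: eq_card => z; apply/imsetP/idP.
    by case=> x; rewrite !inE => /andP[_ ?] ->.
  case/imsetP => y yA ->.
  have [x xR fxy] := nest (subsetP sAP y yA).
  by exists x => //; rewrite !inE xR fxy; apply/imsetP; exists y.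
move=> <-; by rewrite addKn.
Qed.

Lemma rook_step k : N f g (P :|: R) k.+1 = N f g P k.+1 + (#|R| - k) * N f g P k.
Proof.
rewrite /N -(cardsID [set A : {set T} | A \subset P]).
have -> : NS f g (P :|: R) k.+1 :&: [set A : {set T} | A \subset P] = NS f g P k.+1.
  apply/setP => A; rewrite !inE; case sAP: (A \subset P); rewrite ?andbF ?andbT //=.
  by rewrite (subset_trans sAP (subsetUl _ _)).
congr (_ + _).
pose X := [set p : {set T} * T | (p.1 \in NS f g P k) && (p.2 \in R) && (f p.2 \notin f @: p.1)].
have -> : NS f g (P :|: R) k.+1 :\: [set A : {set T} | A \subset P] =
          (fun p : {set T} * T => p.2 |: p.1) @: X.
  apply/setP => A; apply/idP/imsetP.
    rewrite !inE => /andP [nsAP /andP[/andP[sAPR /eqP cA] naA]].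
    have [x xA xnP] : exists2 x, x \in A & x \notin P.
      by apply/exists_inP; move: nsAP; apply: contraR => /exists_inPn H; apply/subsetP => y /H /negPn.
    have xR : x \in R by move: (subsetP sAPR x xA); rewrite inE (negbTE xnP).
    exists (A :\ x, x); last by rewrite /= setD1K.
    rewrite !inE xR andbT /=.
    apply/andP; split; [apply/andP; split; [apply/andP; split|] |].
    - apply/subsetP => y; rewrite !inE => /andP[nyx yA].
      move: (subsetP sAPR y yA); rewrite inE; case/orP => // yR.
      have nxy : x != y by rewrite eq_sym.
      by case: (naP _ _ _ naA x y xA yA nxy); rewrite (gR xR yR) eqxx.
    - by rewrite (cardsD1 x A) xA add1n in cA; case: cA => ->.
    - apply: na_sub naA; exact: subsetDl.
    - apply/imsetP => -[y]; rewrite !inE => /andP[nyx yA] fxy.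
      have nxy : x != y by rewrite eq_sym.
      by case: (naP _ _ _ naA x y xA yA nxy); rewrite fxy eqxx.
  case=> -[B x]; rewrite inE /= => /andP[/andP[HB xR] fxA] ->.
  move: HB; rewrite inNS => /and3P[sAP /eqP cA naA].
  have xnA : x \notin B by apply: contra (notPR xR) => /(subsetP sAP).
  rewrite in_setD inNS in_set.
  have -> : x |: B \subset P :|: R.
    by rewrite subUset sub1set inE xR orbT (subset_trans sAP (subsetUl _ _)).
  rewrite subUset sub1set (negbTE (notPR xR)) /= cardsU1 xnA cA eqxx /=.
  apply/naP => y z; rewrite !inE => /orP[/eqP->|yA] /orP[/eqP->|zA]; rewrite ?eqxx //.
  - move=> _; split; first by apply: contra fxA => /eqP ->; apply/imsetP; exists z.
    exact: gRP (subsetP sAP _ zA).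
  - move=> _; split; first by apply: contra fxA => /eqP <-; apply/imsetP; exists y.
    by rewrite eq_sym; apply: gRP (subsetP sAP _ yA).
  - by move=> nyz; case: (naP _ _ _ naA y z yA zA nyz) => -> ->.
rewrite card_in_imset; last first.
  move=> [A x] [B y]; rewrite !inE /= => /andP[/andP[/andP[/andP[sAP _] _] xR] fxA]
     /andP[/andP[/andP[/andP[sBP _] _] yR] fyB] E.
  have xnA : x \notin A by apply: contra (notPR xR) => /(subsetP sAP).
  have ynB : y \notin B by apply: contra (notPR yR) => /(subsetP sBP).
  have exy : x = y.
    move: (setU11 x A); rewrite E !inE => /orP[/eqP //|xB].
    by move: (notPR xR); rewrite (subsetP sBP _ xB).
  subst y; congr (_, _).
  by rewrite -(setU1K xnA) E setU1K.
rewrite -sum1_card.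
rewrite (eq_bigl (fun p : {set T} * T => (p.1 \in NS f g P k) && ((p.2 \in R) && (f p.2 \notin f @: p.1)))); last first.
  by move=> [A x]; rewrite !inE andbA.
rewrite -(pair_big_dep (fun A => A \in NS f g P k) (fun A x => (x \in R) && (f x \notin f @: A)) (fun _ _ => 1)) /=.
rewrite (eq_bigr (fun _ => #|R| - k)).
  by rewrite sum_nat_const mulnC.
move=> A HA; rewrite sum1_card -(ext_card HA); apply: eq_card => x; by rewrite !inE.
Qed.
End Step.

Section Split.
Variables (T U : finType) (f g : T -> U).
Variables (P1 P2 : {set T}).
Hypothesis d12 : forall x, x \in P1 -> x \notin P2.
Hypothesis cross : forall x y, x \in P1 -> y \in P2 -> f x != f y /\ g x != g y.

Lemma capU1 (A1 A2 : {set T}) : A1 \subset P1 -> A2 \subset P2 -> (A1 :|: A2) :&: P1 = A1.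
Proof.
move=> /subsetP s1 /subsetP s2; apply/setP => x; rewrite !inE.
case x1: (x \in A1); first by rewrite (s1 _ x1).
case x2: (x \in A2) => //=; apply/negP => xP1; by move: (d12 xP1); rewrite (s2 _ x2).
Qed.

Lemma capU2 (A1 A2 : {set T}) : A1 \subset P1 -> A2 \subset P2 -> (A1 :|: A2) :&: P2 = A2.
Proof.
move=> /subsetP s1 /subsetP s2; apply/setP => x; rewrite !inE.
case x2: (x \in A2); first by rewrite (s2 _ x2) orbT.
case x1: (x \in A1) => //=; apply/negP => xP2; by move: (d12 (s1 _ x1)); rewrite xP2.
Qed.

Lemma N_split k : N f g (P1 :|: P2) k = \sum_(j < k.+1) N f g P1 j * N f g P2 (k - j).
Proof.
rewrite /N -sum1_card (partition_big (fun A => inord #|A :&: P1| : 'I_k.+1) predT) //=.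
apply: eq_bigr => j _.
have jk : (j <= k)%N by rewrite -ltnS.
rewrite -cardsX -(@card_in_imset _ _ (fun p : {set T} * {set T} => p.1 :|: p.2)); last first.
  move=> [A1 A2] [B1 B2]; rewrite !in_setX /= => /andP[HA1 HA2] /andP[HB1 HB2] E.
  move: HA1 HA2 HB1 HB2; rewrite !inNS => /and3P[sA1 _ _] /and3P[sA2 _ _] /and3P[sB1 _ _] /and3P[sB2 _ _].
  have E1 := congr1 (fun S => S :&: P1) E; have E2 := congr1 (fun S => S :&: P2) E.
  rewrite /= (capU1 sA1 sA2) (capU1 sB1 sB2) in E1.
  rewrite /= (capU2 sA1 sA2) (capU2 sB1 sB2) in E2.
  by rewrite E1 E2.
rewrite -sum1_card; apply: eq_bigl => A; apply/idP/imsetP.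
  rewrite inNS => /andP[/and3P[sAP /eqP cA naA] /eqP ej].
  have cj : #|A :&: P1| = j.
    rewrite -ej inordK // ltnS -cA; exact: subset_leq_card (subsetIl _ _).
  exists (A :&: P1, A :&: P2); last first.
    by rewrite /= -setIUr; apply/esym/setIidPl.
  rewrite inE /= !inNS subsetIr subsetIr cj eqxx /=.
  rewrite !(na_sub (subsetIl _ _) naA) !andbT.
  have : #|A :&: P1| + #|A :&: P2| = #|A|.
    rewrite -[in RHS](setIidPl sAP) setIUr cardsU.
    have -> : A :&: P1 :&: (A :&: P2) = set0.
      apply/setP => x; rewrite !inE; apply/negP => /andP[/andP[_ x1] /andP[_ x2]].
      by move: (d12 x1); rewrite x2.
    by rewrite cards0 subn0.
  move=> H; apply/eqP; rewrite cj in H; lia.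
case=> -[A1 A2]; rewrite in_setX /= !inNS => /andP[/and3P[s1 /eqP c1 n1] /and3P[s2 /eqP c2 n2]] ->.
rewrite (capU1 s1 s2) c1.
apply/andP; split; last by apply/eqP/val_inj; rewrite /= inordK.
apply/and3P; split.
- by apply: setUSS.
- rewrite cardsU.
  have -> : A1 :&: A2 = set0.
    apply/setP => x; rewrite !inE; apply/negP => /andP[x1 x2].
    by move: (d12 (subsetP s1 _ x1)); rewrite (subsetP s2 _ x2).
  by rewrite cards0 subn0 c1 c2 subnKC.
- apply/naP => x y; rewrite !inE => /orP[x1|x2] /orP[y1|y2] nxy.
  + exact: (naP _ _ _ n1).
  + exact: cross (subsetP s1 _ x1) (subsetP s2 _ y2).
  + have [a b] := cross (subsetP s1 _ y1) (subsetP s2 _ x2).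
    by split; rewrite eq_sym.
  + exact: (naP _ _ _ n2).
Qed.
End Split.

Definition tS n k i := if k <= n then stirling2 (n - i) (n - k) else 0.
Definition F n h k := \sum_(i < h.+1) 'C(h, i) * tS n k i.

Lemma S2_lt n k : n < k -> stirling2 n k = 0.
Proof.
elim: n k => [|n IH] [|k] //= lt; rewrite (IH k) ?(IH k.+1) ?muln0 //; exact: leqW.
Qed.

Lemma S2_nn n : stirling2 n n = 1.
Proof. elim: n => //= n IH; rewrite IH S2_lt ?muln0 //. Qed.

Lemma F0 n h : h <= n -> F n h 0 = 1.
Proof.
move=> hn; rewrite /F big_ord_recl /= bin0 mul1n /tS leq0n !subn0 S2_nn.
rewrite big1 // => i _; rewrite /bump /= add1n S2_lt ?muln0 //.
have : i < h by []. lia.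
Qed.

Lemma tS_step0 n k i : i <= n ->
  tS n.+1 k.+1 i = tS n k.+1 i + (n - k) * tS n k i.
Proof.
move=> hi; rewrite /tS.
case: (ltngtP k n) => kn.
- rewrite ltnS (ltnW kn).
  have -> : n.+1 - i = (n - i).+1 by lia.
  have -> : n.+1 - k.+1 = (n - k.+1).+1 by lia.
  have -> : n - k = (n - k.+1).+1 by lia.
  by rewrite /= addnC.
- by rewrite ltnS (leqNgt k n) kn /= muln0.
- subst k; rewrite !subnn mul0n ltnS leqnn.
  by have -> : n.+1 - i = (n - i).+1 by lia.
Qed.

Lemma F_step0 n h k : h <= n -> F n.+1 h k.+1 = F n h k.+1 + (n - k) * F n h k.
Proof.
move=> hn; rewrite /F big_distrr -big_split /=; apply: eq_bigr => i _.
rewrite tS_step0; last by have : i < h.+1 by []; lia.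
by rewrite mulnDr mulnCA.
Qed.

Lemma F_gt n h k : n < k -> F n h k = 0.
Proof. by move=> nk; rewrite /F big1 // => i _; rewrite /tS leqNgt nk muln0. Qed.

Lemma F_step1 n h k : h <= n -> F n.+1 h.+1 k.+1 = F n h k.+1 + (n.+1 - k) * F n h k.
Proof.
move=> hn.
have E2 : \sum_(i < h.+1) 'C(h, i) * tS n.+1 k.+1 i.+1 = F n h k.
  by apply: eq_bigr => i _; rewrite /tS ltnS !subSS.
have E1 : tS n.+1 k.+1 0 + \sum_(i < h.+1) 'C(h, i.+1) * tS n.+1 k.+1 i.+1
          = F n.+1 h k.+1.
  rewrite /F [RHS]big_ord_recl [X in _ + X = _]big_ord_recr /= bin0 mul1n.
  rewrite (bin_small (ltnSn h)) mul0n addn0.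
  by congr (_ + _); apply: eq_bigr => i _; rewrite /bump /= add1n.
rewrite {1}/F big_ord_recl /=.
rewrite (eq_bigr (fun i : 'I_h.+1 => 'C(h, i.+1) * tS n.+1 k.+1 i.+1 + 'C(h, i) * tS n.+1 k.+1 i.+1)); last first.
  by move=> i _; rewrite /bump /= add1n binS mulnDl.
rewrite big_split /= E2 addnA mul1n E1 F_step0 // -addnA; congr (_ + _).
case: (leqP k n) => kn.
  by rewrite subSn // mulSn addnC.
by rewrite F_gt // !muln0.
Qed.

Lemma nest_arith2 m r a b q : a < m -> b < m -> r <= m + m - 2 ->
  a <= b + r -> b <= a + r -> a + r + 2 <= b + m + m -> b + r + 2 <= a + m + m ->
  q + q = r + a + b ->
  exists i j, [/\ i < m, j < m, i + j = r & i + m - j = a + m - b].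
Proof.
move=> ha hb hr h1 h2 h3 h4 hq; exists (q - b), (q - a); split; lia.
Qed.

Lemma len_bounds m r a b : a < m -> b < m -> r <= m + m - 2 ->
  minn (a + b).+1 (m + m - 1 - (a + b)) <= minn r.+1 (m + m - 1 - r) ->
  [/\ a <= b + r, b <= a + r, a + r + 2 <= b + m + m & b + r + 2 <= a + m + m].
Proof.
move=> ha hb hr; rewrite /minn; case: ifP => h1; case: ifP => h2 h; split; lia.
Qed.

Lemma oddLen m s : 0 < m -> s <= m + m - 2 -> odd (minn s.+1 (m + m - 1 - s)) = ~~ odd s.
Proof.
move=> m0 hs; rewrite /minn; case: ifP => h //.
rewrite oddB; last by lia.
rewrite oddB; last by lia.
by rewrite addnn odd_double /=.
Qed.

Lemma nest_arith m r a b : a < m -> b < m -> r <= m + m - 2 ->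
  minn (a + b).+1 (m + m - 1 - (a + b)) <= minn r.+1 (m + m - 1 - r) ->
  odd (minn (a + b).+1 (m + m - 1 - (a + b))) = odd (minn r.+1 (m + m - 1 - r)) ->
  exists i j, [/\ i < m, j < m, i + j = r & i + m - j = a + m - b].
Proof.
move=> ha hb hr h1 h2.
have hab : a + b <= m + m - 2 by lia.
have m0 : 0 < m by lia.
rewrite !oddLen // in h2.
have [b1 b2 b3 b4] := len_bounds ha hb hr h1.
have ev : odd (r + a + b) = false.
  by rewrite -addnA oddD; move/negb_inj: h2 => ->; case: (odd r).
have hq := odd_double_half (r + a + b); rewrite ev add0n -addnn in hq.
exact: nest_arith2 ha hb hr b1 b2 b3 b4 hq.
Qed.

Section Board.
Variable m : nat.
Definition BT := ('I_m * 'I_m)%type.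
Definition fc (x : BT) : 'I_(m + m).+1 := inord (x.1 + m - x.2).
Definition gr (x : BT) : 'I_(m + m).+1 := inord (x.1 + x.2).
Definition Len s := minn s.+1 (m + m - 1 - s).
Definition sr (x : BT) := (x.1 + x.2)%N.
Definition Q e u := [set x : BT | (odd (Len (sr x)) == e) && (Len (sr x) <= u)].
Definition row r := [set x : BT | sr x == r].

Lemma inord_eq a b : a <= m + m -> b <= m + m ->
  (inord a == inord b :> 'I_(m + m).+1) = (a == b).
Proof.
move=> ha hb; apply/eqP/eqP => [E|->] //.
by have := congr1 val E; rewrite /= !inordK.
Qed.

Lemma fc_eq x y : (fc x == fc y) = (x.1 + m - x.2 == y.1 + m - y.2).
Proof. rewrite /fc inord_eq //; have := ltn_ord x.1; have := ltn_ord x.2;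
  have := ltn_ord y.1; have := ltn_ord y.2; lia. Qed.

Lemma gr_eq x y : (gr x == gr y) = (sr x == sr y).
Proof. rewrite /gr inord_eq //; have := ltn_ord x.1; have := ltn_ord x.2;
  have := ltn_ord y.1; have := ltn_ord y.2; lia. Qed.

Lemma pair_eq (x y : BT) : x.1 = y.1 -> x.2 = y.2 -> x = y.
Proof. by case: x y => [a b] [c d] /= -> ->. Qed.

Lemma nonatt_na A : nonattacking A = na fc gr A.
Proof.
apply: eq_forallb => x; congr (_ ==> _); apply: eq_forallb => y.
congr (_ ==> (_ ==> _)); congr (~~ _ && ~~ _).
  rewrite fc_eq /diff_coord; case: x => [a b]; case: y => [c d] /=.
  apply/eqP/eqP; have := ltn_ord a; have := ltn_ord b;
  have := ltn_ord c; have := ltn_ord d; lia.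
rewrite gr_eq /sum_coord /sr; apply/eqP/eqP; lia.
Qed.


Lemma sum_int n lo hi : hi <= n -> \sum_(0 <= i < n) ((lo <= i) && (i < hi) : nat) = hi - lo.
Proof.
elim: n hi => [|n IH] hi hhi.
  by rewrite big_geq //; have -> : hi = 0 by lia.
rewrite big_nat_recr //=.
case: (leqP hi n) => hn.
  rewrite IH //; lia.
have -> : hi = n.+1 by lia.
rewrite (eq_big_nat _ _ (F2 := fun i => ((lo <= i) && (i < n) : nat))); last first.
  move=> i /andP[_ hi']; congr (nat_of_bool _); apply/idP/idP; lia.
rewrite IH //; lia.
Qed.

Lemma card_int lo hi : hi <= m -> #|[set i : 'I_m | (lo <= i) && (i < hi)]| = hi - lo.
Proof.
move=> hm; rewrite -sum1_card big_mkcond /= -(sum_int lo hm) big_mkord.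
by apply: eq_bigr => i _; rewrite inE; case: ifP.
Qed.

Lemma card_row r : r <= m + m - 2 -> #|row r| = Len r.
Proof.
move=> hr.
rewrite -(@card_in_imset _ _ (fun x : BT => x.1)); last first.
  move=> [a b] [c d]; rewrite !inE /sr /= => /eqP h1 /eqP h2 e.
  subst c; congr (_, _); apply/val_inj => /=; lia.
rewrite (eq_card (B := [set i : 'I_m | (r.+1 - m <= i) && (i < minn r.+1 m)])).
  by rewrite card_int ?geq_minr // /Len; lia.
move=> i; rewrite inE; apply/imsetP/idP.
  case=> -[a b]; rewrite inE /sr /= => /eqP <- ->; have := ltn_ord b; have := ltn_ord a; lia.
move=> hi.
have hj : r - i < m by have := ltn_ord i; lia.
exists (i, Ordinal hj) => //; rewrite inE /sr /=; apply/eqP; lia.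
Qed.


Lemma bs_fR r : {in row r &, injective fc}.
Proof.
move=> [a b] [c d]; rewrite !inE /sr /= => /eqP h1 /eqP h2 /eqP; rewrite fc_eq /= => /eqP h3.
have := ltn_ord b; have := ltn_ord d => hb hd.
by congr (_, _); apply/val_inj => /=; lia.
Qed.

Lemma bs_nest (P : {set BT}) r : r <= m + m - 2 ->
  (forall y, y \in P -> [/\ Len (sr y) <= Len r, odd (Len (sr y)) = odd (Len r) & sr y != r]) ->
  forall y, y \in P -> exists2 x, x \in row r & fc x = fc y.
Proof.
move=> hr HP [a b] /HP []; rewrite /Len /sr /= => h1 h2 h3.
have [i [j [hi [hj [e1 e2]]]]] := nest_arith (ltn_ord a) (ltn_ord b) hr h1 h2.
exists (Ordinal hi, Ordinal hj); first by rewrite inE /sr /= e1.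
by apply/eqP; rewrite fc_eq /= e2.
Qed.

Lemma board_step (P : {set BT}) r k : r <= m + m - 2 ->
  (forall y, y \in P -> [/\ Len (sr y) <= Len r, odd (Len (sr y)) = odd (Len r) & sr y != r]) ->
  N fc gr (P :|: row r) k.+1 = N fc gr P k.+1 + (Len r - k) * N fc gr P k.
Proof.
move=> hr HP; rewrite -card_row //; apply: rook_step.
- move=> x; rewrite inE => /eqP sx; apply/negP => /HP [_ _]; by rewrite sx eqxx.
- by move=> x y; rewrite !inE => /eqP sx /eqP sy; apply/eqP; rewrite gr_eq sx sy.
- exact: bs_fR.
- exact: bs_nest.
- move=> x y; rewrite inE => /eqP sx /HP [_ _]; rewrite gr_eq eq_sym sx; done.
Qed.

Lemma Q0 e : Q e 0 = set0.
Proof.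
apply/setP => -[a b]; rewrite !inE /Len /sr /=; apply/negP => /andP[_].
have := ltn_ord a; have := ltn_ord b; lia.
Qed.

Lemma Q_same e u : odd u.+1 != e -> Q e u.+1 = Q e u.
Proof.
move=> H; apply/setP => -[a b]; rewrite !inE /sr /=.
have := ltn_ord a; have := ltn_ord b => ha hb.
case E: (odd (Len (a + b)) == e) => //=.
apply/idP/idP => h; last lia.
move: H E h; case: e; rewrite /Len; lia.
Qed.

Lemma Q_two e u : odd u.+1 == e -> u.+1 < m ->
  Q e u.+1 = (Q e u :|: row u) :|: row (m + m - 2 - u).
Proof.
move=> H hu; apply/setP => -[a b]; rewrite !inE /sr /=.
have := ltn_ord a; have := ltn_ord b.
move: H; case: e; rewrite /Len => H ha hb; apply/idP/idP; lia.
Qed.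

Lemma Q_one e : odd m == e -> 0 < m -> Q e m = Q e m.-1 :|: row m.-1.
Proof.
move=> H hu; apply/setP => -[a b]; rewrite !inE /sr /=.
have := ltn_ord a; have := ltn_ord b.
move: H; case: e; rewrite /Len => H ha hb; apply/idP/idP; lia.
Qed.

Lemma Q_full : [set: BT] = Q false m :|: Q true m.
Proof.
apply/setP => -[a b]; rewrite !inE /sr /=.
have := ltn_ord a; have := ltn_ord b; rewrite /Len => ha hb; apply/esym; lia.
Qed.


Definition nn e u := u + (odd u == e).
Definition hh e u := if e then (nn e u)./2 else (nn e u).-1./2.

Lemma hh_le e u : hh e u <= nn e u.
Proof. rewrite /hh /nn; case: e; lia. Qed.

Lemma condQ e u r y : odd u.+1 == e -> u < m -> Len r = u.+1 -> y \in Q e u ->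
  [/\ Len (sr y) <= Len r, odd (Len (sr y)) = odd (Len r) & sr y != r].
Proof.
move=> He hu hr; rewrite inE hr => /andP[/eqP h1 h2]; split => //.
- lia.
- by rewrite h1 (eqP He).
- by apply/eqP => E; move: h2; rewrite E hr; lia.
Qed.

Lemma nn_same e u : odd u.+1 != e -> nn e u.+1 = nn e u /\ hh e u.+1 = hh e u.
Proof. rewrite /hh /nn; case: e; split; lia. Qed.

Lemma nn_two e u : odd u.+1 == e ->
  [/\ nn e u = u, nn e u.+1 = u.+2 & hh e u.+1 = (hh e u).+1].
Proof. rewrite /hh /nn; case: e; split; lia. Qed.

Lemma nn_last e : 0 < m -> odd m == e ->
  nn e m.-1 = m.-1 /\ (if e then uphalf m else m./2) = (hh e m.-1).+1.
Proof. rewrite /hh /nn; case: e; split; lia. Qed.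

Lemma nn_last' e : 0 < m -> odd m != e ->
  nn e m.-1 = m /\ (if e then uphalf m else m./2) = hh e m.-1.
Proof. rewrite /hh /nn; case: e; split; lia. Qed.

Lemma Qcount e u : u < m -> forall k, N fc gr (Q e u) k = F (nn e u) (hh e u) k.
Proof.
elim: u => [|u IH] hu k.
  rewrite Q0 N0 /nn /hh; case: e; case: k => [|[|k]];
    by rewrite /F big_ord_recl big_ord0 /tS.
have IH' := IH (ltnW hu).
case: (boolP (odd u.+1 == e)) => He; last first.
  by have [-> ->] := nn_same He; rewrite Q_same // IH'.
have [Hn Hn1 Hh1] := nn_two He.
have hhu : hh e u <= u by rewrite -{2}Hn hh_le.
have LU : Len u = u.+1 by rewrite /Len; lia.
have LR : Len (m + m - 2 - u) = u.+1 by rewrite /Len; lia.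
have S1 : forall k, N fc gr (Q e u :|: row u) k = F u.+1 (hh e u).+1 k.
  case=> [|j]; first by rewrite NS0 F0.
  rewrite board_step; last 2 first.
  - lia.
  - by move=> y; apply: (condQ He (ltnW hu) LU).
  by rewrite !IH' Hn LU F_step1.
rewrite Q_two // Hn1 Hh1; case: k => [|k]; first by rewrite NS0 F0 //; lia.
rewrite board_step; last 2 first.
- lia.
- move=> y; rewrite inE => /orP[yQ|]; first exact: (condQ He (ltnW hu) LR yQ).
  rewrite inE /sr => /eqP sy; rewrite /sr sy LU LR; split => //; lia.
by rewrite !S1 LR [RHS]F_step0.
Qed.

Lemma QcountM e k : N fc gr (Q e m) k = F m (if e then uphalf m else m./2) k.
Proof.
case: (posnP m) => hm.
  have -> : Q e m = set0.
    by apply/setP => -[a b]; have := ltn_ord a; lia.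
  rewrite N0 hm /=; case: e; case: k => [|k] //=; by rewrite /F big_ord_recl big_ord0 /tS.
have hm1 : m.-1 < m by lia.
have IH := Qcount e hm1.
case: (boolP (odd m == e)) => He; last first.
  have E : m = m.-1.+1 by lia.
  have [Hn Hh] := nn_last' hm He.
  have QE : Q e m = Q e m.-1 by move: (@Q_same e m.-1); rewrite prednK //; apply.
  by rewrite QE IH Hn Hh.
have [Hn Hh] := nn_last hm He.
have LU : Len m.-1 = m by rewrite /Len; lia.
rewrite Q_one //; case: k => [|k].
  by rewrite NS0 F0 //; case: (e) Hh; lia.
rewrite board_step; last 2 first.
- lia.
- move=> y; apply: (condQ (u := m.-1)); rewrite ?prednK ?LU //.
rewrite !IH Hn LU Hh.
have E : F m (hh e m.-1).+1 k.+1 = F m.-1.+1 (hh e m.-1).+1 k.+1 by rewrite prednK.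
rewrite E F_step1 ?prednK //.
by rewrite -{2}Hn hh_le.
Qed.

End Board.

Lemma bishops_F m k : bishopsS m k =
  \sum_(j < k.+1) F m m./2 j * F m (uphalf m) (k - j).
Proof.
have -> : bishopsS m k = N (@fc m) (@gr m) [set: BT m] k.
  rewrite /bishopsS /N; apply: eq_card => A; rewrite !inE nonatt_na subsetT.
  by rewrite andbC.
rewrite Q_full N_split.
  by apply: eq_bigr => j _; rewrite !QcountM.
- by move=> -[a b]; rewrite !inE => /andP[/eqP -> _].
- move=> [a b] [c d]; rewrite !inE fc_eq gr_eq /sr /= => /andP[/eqP h1 _] /andP[/eqP h2 _].
  have := ltn_ord a; have := ltn_ord b; have := ltn_ord c; have := ltn_ord d.
  move: h1 h2; rewrite /Len => h1 h2 ha hb hc hd; split; lia.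
Qed.

Lemma Zconv m i j : i <= m -> stirling2Z (m%:Z - i%:Z)%R (m%:Z - j%:Z)%R = tS m j i.
Proof.
move=> im; have -> : (m%:Z - i%:Z = Posz (m - i))%R by lia.
rewrite /tS; case: leqP => jm.
  have -> : (m%:Z - j%:Z = Posz (m - j))%R by lia. case: (m - i) => [|a]; case: (m - j) => [|b]; reflexivity.
have -> : (m%:Z - j%:Z = Negz (j - m).-1)%R by lia.
by case: (m - i).
Qed.

Lemma termZ m h i j : h <= m ->
  'C(h, i) * stirling2Z (m%:Z - i%:Z)%R (m%:Z - j%:Z)%R = 'C(h, i) * tS m j i.
Proof.
move=> hm; case: (leqP i m) => im; first by rewrite Zconv.
by rewrite bin_small ?mul0n //; lia.
Qed.

Lemma term0 m h i j : h <= m -> j < i -> 'C(h, i) * tS m j i = 0.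
Proof.
move=> hm ji; case: (leqP i h) => ih; last by rewrite bin_small ?mul0n.
rewrite /tS; case: ifP => jm; last by rewrite muln0.
by rewrite S2_lt ?muln0 //; lia.
Qed.

Lemma G1 m h j : h <= m ->
  \sum_(0 <= i < j.+1) 'C(h, i) * stirling2Z (m%:Z - i%:Z)%R (m%:Z - j%:Z)%R = F m h j.
Proof.
move=> hm.
rewrite (eq_bigr (fun i => 'C(h, i) * tS m j i)); last by move=> i _; rewrite termZ.
have -> : \sum_(0 <= i < j.+1) 'C(h, i) * tS m j i = \sum_(0 <= i < (h + j).+1) 'C(h, i) * tS m j i.
  rewrite [RHS](big_cat_nat (n := j.+1)) //=; last by lia.
  rewrite [X in _ = _ + X]big1_seq ?addn0 // => i /andP[_]; rewrite mem_index_iota => /andP[hi _].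
  exact: term0.
rewrite /F -(big_mkord xpredT (fun i => 'C(h, i) * tS m j i)).
rewrite [LHS](big_cat_nat (n := h.+1)) //=; last by lia.
rewrite [X in _ + X = _]big1_seq ?addn0 // => i /andP[_]; rewrite mem_index_iota => /andP[hi _].
by rewrite bin_small ?mul0n.
Qed.

Theorem theorem2p3 (m k : nat) :
  bishopsS m k =
  \sum_(0 <= j < k.+1) \sum_(0 <= i < j.+1)
     ('C(m./2, i) * stirling2Z (m%:Z - i%:Z)%R (m%:Z - j%:Z)%R *
      \sum_(0 <= l < (k - j).+1)
         'C(uphalf m, l) * stirling2Z (m%:Z - l%:Z)%R (m%:Z - k%:Z + j%:Z)%R)%N.
Proof.
rewrite bishops_F [RHS]big_mkord; apply: eq_bigr => j _.
rewrite -big_distrl /= G1; last by lia.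
have jk : j <= k by rewrite -ltnS.
have -> : (m%:Z - k%:Z + j%:Z = m%:Z - (k - j)%:Z)%R by lia.
by rewrite G1 //; lia.
Qed.
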